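(* Let $(\Omega,\mathcal F,\mu)$ be a measure space and $p\in[1,\infty)$. If $\mathscr A\subset L^p(\Omega,\mathcal F,\mu)$ is uniformly integrable, then $\mathscr A$ is uniformly approximable.
   Context: All measures are assumed not identically zero. $\mathscr A\subset L^p$ is uniformly integrable if $\inf_{g\in L^p_+}\sup_{f\in\mathscr A}\int_{\{|f|>g\}}|f|^p\,d\mu=0$, where $L^p_+$ is the set of nonnegative functions in $L^p$. $\mathscr G_{p,k}$ is the set of functions $\sum_{i=1}^l a_i\mathbf 1_{A_i}\in L^p$ with $l\le k$, $\{A_i\}$ a measurable partition of $\Omega$, $a_i\in\mathbb R$. $N_{p,\varepsilon}(\mathscr A)=\inf\{k\ge1:\ \forall f\in\mathscr A\ \exists h\in\mathscr G_{p,k},\ \|f-h\|_p\le\varepsilon\}$ ($\inf\emptyset=\infty$); $\mathscr A$ is uniformly approximable if $N_{p,\varepsilon}(\mathscr A)<\infty$ for every $\varepsilon>0$. *)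

(* Defs.v *)
From HB Require Import structures.
From mathcomp Require Import all_boot all_order all_algebra.
From mathcomp Require Import all_classical all_reals all_analysis.
Set Implicit Arguments. Unset Strict Implicit. Unset Printing Implicit Defensive.
Import Order.TTheory GRing.Theory Num.Theory.
Local Open Scope classical_set_scope.
Local Open Scope ring_scope.

(* L^p is represented at the level of functions: f \in Lfun mu p%:E means f is
   measurable with finite Lp-norm (hoelder.v). *)

Definition Lp_plus d (T : measurableType d) (R : realType)
  (mu : {measure set T -> \bar R}) (p : R) : set (T -> R) :=
  [set g | g \in Lfun mu p%:E /\ forall x, 0 <= g x].

Definition uniformly_integrable d (T : measurableType d) (R : realType)
  (mu : {measure set T -> \bar R}) (p : R) (A : set (T -> R)) : Prop :=
  ereal_inf [set ereal_sup
               [set (\int[mu]_(x in [set y | (g y < `|f y|)%R]) ((`|f x| `^ p)%R)%:E)%E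
               | f in A]
            | g in Lp_plus mu p] = 0%E.

Definition G_pk d (T : measurableType d) (R : realType)
  (mu : {measure set T -> \bar R}) (p : R) (k : nat) : set (T -> R) :=
  [set h | h \in Lfun mu p%:E /\
     exists (l : nat) (a : 'I_l -> R) (B : 'I_l -> set T),
       (l <= k)%N /\
       (forall i, measurable (B i)) /\
       (forall i j, i != j -> B i `&` B j = set0) /\
       (forall x, exists i, B i x) /\
       h = (fun x => \sum_(i < l) a i * \1_(B i) x)].

(* N_{p,eps}(A) < oo, i.e. the set of admissible k >= 1 is nonempty *)
Definition N_finite d (T : measurableType d) (R : realType)
  (mu : {measure set T -> \bar R}) (p : R) (eps : R) (A : set (T -> R)) : Prop :=
  exists k : nat, (1 <= k)%N /\
    forall f, A f -> exists h, G_pk mu p k h /\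
      (Lnorm mu p%:E (fun x => (f x - h x)%:E) <= eps%:E)%E.

Definition uniformly_approximable d (T : measurableType d) (R : realType)
  (mu : {measure set T -> \bar R}) (p : R) (A : set (T -> R)) : Prop :=
  forall eps : R, 0 < eps -> N_finite mu p eps A.

(* Main.v *)
Require Import Defs.
From HB Require Import structures.
From mathcomp Require Import all_boot all_order all_algebra.
From mathcomp Require Import all_classical all_reals all_analysis.
From mathcomp Require Import zify lra ring.
From mathcomp Require Import measurable_realfun.
Import Order.TTheory GRing.Theory Num.Theory.
Local Open Scope classical_set_scope.
Local Open Scope ring_scope.
Section aux.
Context {d} {T : measurableType d} {R : realType}.
Lemma simple_repr (h : T -> R) (V : seq R) :
  measurable_fun setT h -> uniq V -> (forall x, h x \in V) ->
  exists (a : 'I_(size V) -> R) (B : 'I_(size V) -> set T),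
   (forall i, measurable (B i)) /\
   (forall i j, i != j -> B i `&` B j = set0) /\
   (forall x, exists i, B i x) /\
   h = (fun x => \sum_(i < size V) a i * \1_(B i) x).
Proof.
move=> mh uV hV.
exists (fun i => nth 0 V i), (fun i => h @^-1` [set nth 0 V i]).
split; [|split; [|split]].
- move=> i; rewrite -[X in measurable X]setTI; exact: mh.
- move=> i j ij; apply/seteqP; split => [x /= [hi hj]|//].
  move/eqP: ij; apply; apply: val_inj; apply/eqP.
  by rewrite -(nth_uniq 0 _ _ uV) ?ltn_ord// -hi -hj.
- move=> x; have Hi : (index (h x) V < size V)%N by rewrite index_mem.
  by exists (Ordinal Hi); rewrite /= nth_index.
- apply/funext => x; have Hi : (index (h x) V < size V)%N by rewrite index_mem.
  rewrite (bigD1 (Ordinal Hi)) //= big1 => [|j jn].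
    by rewrite indicE mem_set ?nth_index// mulr1 addr0.
  rewrite indicE memNset ?mulr0// => /= hj.
  move/eqP: jn; apply; apply: val_inj => /=.
  by rewrite hj index_uniq.
Qed.
End aux.
Section aux2.
Context {R : realType}.

Lemma quant (eta M y : R) (N : nat) : 0 < eta -> M / eta < N.+1%:R -> `|y| <= M ->
  (- (N.+1)%:Z <= Num.floor (y / eta))%R /\ (Num.floor (y / eta) <= N%:Z)%R /\
  0 <= y - eta * (Num.floor (y / eta))%:~R < eta.
Proof.
move=> eta0 HN yM.
have eta0' : eta != 0 by rewrite gt_eqF.
have [Mly yM'] : - M <= y /\ y <= M by move: yM; rewrite ler_norml => /andP.
split; [|split].
- rewrite Num.Theory.floor_ge_int.
  rewrite mulrNz ler_pdivlMr // mulNr.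
  apply: le_trans Mly; rewrite lerN2 -ler_pdivrMr //.
  by apply: ltW; rewrite -[(N.+1)%:Z%:~R]/(N.+1%:R).
- have : (Num.floor (y / eta) < N.+1%:Z)%R.
    rewrite Num.Theory.floor_lt_int; apply: le_lt_trans HN.
    by rewrite ler_pM2r ?invr_gt0.
  lia.
- have yE : y = eta * (y / eta) by rewrite mulrC divfK.
  rewrite [X in X - _]yE -mulrBr; apply/andP; split.
    apply: mulr_ge0; first exact: ltW.
    by rewrite subr_ge0 Num.Theory.floor_le.
  rewrite -[X in _ < X]mulr1 ltr_pM2l // ltrBlDl.
  by have := Num.Theory.floorD1_gt (y / eta); rewrite intrD.
Qed.

Definition Zs (N : nat) : seq int := [seq (i%:Z - N.+1%:Z)%R | i <- iota 0 (N.+1 + N.+1)].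
Definition Vs (eta : R) (N : nat) : seq R := [seq eta * z%:~R | z <- Zs N].

Lemma size_Vs eta N : size (Vs eta N) = (N.+1 + N.+1)%N.
Proof. by rewrite /Vs /Zs !size_map size_iota. Qed.

Lemma uniq_Vs eta N : eta != 0 -> uniq (Vs eta N).
Proof.
move=> eta0; rewrite /Vs map_inj_uniq; last first.
  by move=> a b /(mulfI eta0) /intr_inj.
rewrite /Zs map_inj_uniq ?iota_uniq //.
by move=> a b /addIr [].
Qed.

Lemma mem_Vs eta N (k : int) : (- (N.+1)%:Z <= k)%R -> (k <= N%:Z)%R ->
  eta * k%:~R \in Vs eta N.
Proof.
move=> k1 k2; rewrite /Vs; apply: (map_f (fun z : int => eta * z%:~R)); rewrite /Zs; apply/mapP.
exists (absz (k + (N.+1)%:Z)%R); first by rewrite mem_iota; lia.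
lia.
Qed.

End aux2.
Lemma Lnorm_le d (T : measurableType d) (R : realType) (mu : {measure set T -> \bar R})
  (F : T -> R) (p eps : R) : 0 < p -> 0 <= eps ->
  (\int[mu]_x (`|F x| `^ p)%:E <= (eps `^ p)%:E)%E ->
  (Lnorm mu p%:E (fun x => (F x)%:E) <= eps%:E)%E.
Proof.
move=> p0 eps0 H; rewrite unlock /=.
idtac.

set I := (\int[mu]_x _)%E.
have I0 : (0 <= I)%E by apply: integral_ge0 => x _; rewrite lee_fin powR_ge0.
have If : I \is a fin_num by rewrite ge0_fin_numE //; apply: le_lt_trans H _; exact: ltry.
rewrite -(fineK If) poweR_EFin lee_fin.
have -> : eps = (eps `^ p) `^ p^-1 by rewrite -powRrM mulfV ?gt_eqF // powRr1.
apply: ge0_ler_powR.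
- by rewrite invr_ge0 ltW.
- by rewrite nnegrE fine_ge0.
- by rewrite nnegrE powR_ge0.
- by rewrite -lee_fin fineK.
Qed.

Theorem proposition4p1 (d : measure_display) (T : measurableType d) (R : realType)
  (mu : {measure set T -> \bar R}) (p : R) (A : set (T -> R)) :
  mu [set: T] != 0%E ->
  1 <= p ->
  (forall f, A f -> f \in Lfun mu p%:E) ->
  uniformly_integrable mu p A ->
  uniformly_approximable mu p A.
Proof.
move=> mu0 p1 AL UI eps eps0.
have p0 : 0 < p by apply: lt_le_trans p1.
pose e := eps `^ p.
have e0 : 0 < e by apply: powR_gt0.
pose gam := e / 4.
have gam0 : 0 < gam by rewrite divr_gt0.
have [g [gL g0] gUI] : exists2 g, Lp_plus mu p g & forall f, A f ->
   (\int[mu]_(x in [set y | (g y < `|f y|)%R]) (`|f x| `^ p)%:E <= gam%:E)%E.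
  have : (0 < gam%:E)%E by rewrite lte_fin.
  rewrite -[X in (X < _)%E]UI.
  move=> /ereal_inf_lt [_ [g Lg <-] sup_lt]; exists g => // f Af.
  apply: le_trans (ltW sup_lt); apply: ereal_sup_ubound; by exists f.
have mg : measurable_fun setT g.
  move: gL; rewrite inE => /andP[/[!inE]/= mg _].
  apply: mg.
have ig : mu.-integrable setT (fun x => (g x `^ p)%:E).
  have := Lfun_integrable p1 gL; apply: (eq_integrable measurableT) => x _.
  by rewrite ger0_norm.
pose G := fine (\int[mu]_x (g x `^ p)%:E)%E.
have GE : (\int[mu]_x (g x `^ p)%:E)%E = G%:E by rewrite fineK // integrable_fin_num.
have G0 : 0 <= G by apply: fine_ge0; apply: integral_ge0 => x _; rewrite lee_fin powR_ge0.
pose badb (n : nat) (x : T) := (g x <= n.+1%:R^-1) || (n.+1%:R < g x).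
have mbadb n : measurable_fun setT (badb n).
  apply: measurable_or.
  - by apply: measurable_realfun.measurable_fun_ler; [apply: mg|apply: measurable_cst].
  - by apply: measurable_realfun.measurable_fun_ltr; [apply: measurable_cst|apply: mg].
have mbad n : measurable [set x | badb n x].
  by have := mbadb n measurableT [set true] I; rewrite setTI.
have mgp : measurable_fun setT (fun x => g x `^ p).
  exact: measurableT_comp (measurable_realfun.measurable_powR p) mg.
pose f_ : nat -> T -> \bar R := fun n x => ((g x `^ p) * \1_[set x | badb n x] x)%:E.
have mf_ n : measurable_fun setT (f_ n).
  apply/measurable_EFinP; apply: measurable_funM => //; exact: measurable_indic.
have f_f : {ae mu, forall x, setT x -> f_ ^~ x @ \oo --> (cst 0%E : T -> \bar R) x}.
  apply: aeW => x _ /=.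
  apply: cvg_near_cst.
  have [gx0|gx0] := eqVneq (g x) 0.
    by apply: nearW => n; rewrite /f_ gx0 powR0 ?gt_eqF // mul0r.
  have gxp : 0 < g x by rewrite lt_def gx0 g0.
  exists (Num.truncn (g x + (g x)^-1)) => // n /= mn.
  have H1 : g x + (g x)^-1 < n.+1%:R.
    apply: lt_le_trans (Num.Theory.real_truncnS_gt (num_real _)) _.
    by rewrite ler_nat.
  rewrite /f_ indicE memNset ?mulr0 // /badb /=.
  apply/negP; rewrite negb_or -ltNge -leNgt.
  apply/andP; split.
    rewrite invf_plt ?posrE //; apply: le_lt_trans H1.
    by rewrite lerDr ltW.
  apply: ltW; apply: le_lt_trans H1.
  by rewrite lerDl ltW // invr_gt0.
have f_g : {ae mu, forall x n, setT x -> (`|f_ n x| <= (g x `^ p)%:E)%E}.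
  apply: aeW => x n _.
  rewrite /f_ abse_EFin lee_fin ger0_norm ?mulr_ge0 ?powR_ge0 //.
    by apply: ler_piMr; [exact: powR_ge0|rewrite /indic; case: (_ \in _)].
have [_ _ cvg] := @dominated_convergence _ T R mu setT measurableT f_ (cst 0%E)
  (fun x => (g x `^ p)%:E) mf_ (measurable_cst _) f_f ig f_g.
rewrite integral0 in cvg.
have [n Hn] : exists n, (\int[mu]_(x in setT) f_ n x < gam%:E)%E.
  apply: contrapT => /forallNP H.
  have : (gam%:E <= 0)%E.
    apply: cvge_ge cvg; apply: nearW => n.
    by rewrite leNgt; apply/negP; apply: H.
  by rewrite lee_fin leNgt gam0.
pose delta : R := n.+1%:R^-1.
pose M : R := n.+1%:R.
have delta0 : 0 < delta by rewrite invr_gt0.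
have G10 : 0 < G + 1 by lra.
pose t := (gam / (G + 1)) `^ p^-1.
have t0 : 0 < t by apply: powR_gt0; rewrite divr_gt0.
have tp : t `^ p = gam / (G + 1).
  by rewrite /t -powRrM mulVf ?gt_eqF // powRr1 // ltW // divr_gt0.
pose eta := delta * t.
have eta0 : 0 < eta by rewrite mulr_gt0.
pose N := Num.truncn (M / eta).
have HN : M / eta < N.+1%:R := Num.Theory.real_truncnS_gt (num_real _).
pose V := Vs eta N.
exists (size V); split; first by rewrite size_Vs.
move=> f Af.
have fL := AL f Af.
have mf : measurable_fun setT f.
  by move: fL; rewrite inE => /andP[/[!inE]/= mf _]; apply: mf.
pose s x := (delta < g x) && (g x <= M) && (`|f x| <= g x).
pose h x := if s x then eta * (Num.floor (f x / eta))%:~R else 0.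
have ms : measurable_fun setT s.
  apply: measurable_and; first apply: measurable_and.
  - by apply: measurable_fun_ltr; [apply: measurable_cst | apply: mg].
  - by apply: measurable_fun_ler; [apply: mg | apply: measurable_cst].
  - apply: measurable_fun_ler; [|apply: mg].
    by apply: measurableT_comp => //; apply: mf.
have mh : measurable_fun setT h.
  apply: measurable_fun_ifT => //.
  apply: (@measurableT_comp _ _ _ _ _ _ (fun y : R => eta * (Num.floor (y / eta))%:~R) _ f _ mf).
  apply: nondecreasing_measurable => // a b ab.
  rewrite ler_pM2l // ler_int Num.Theory.le_floor //.
  by rewrite ler_pM2r // invr_gt0.
have hV x : h x \in V.
  rewrite /h; case: ifP => sx.
    move: sx => /andP[/andP[_ gM] fg].
    have [k1 [k2 _]] := @quant R eta M (f x) N eta0 HN (le_trans fg gM).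
    exact: mem_Vs.
  by have := @mem_Vs R eta N 0%R; rewrite mulr0z mulr0; apply; rewrite ?oppr_le0.
have [a [B [mB [dB [cB hE]]]]] := simple_repr h V mh (@uniq_Vs R eta N (lt0r_neq0 eta0)) hV.
have sE x : s x -> (0 <= f x - h x < eta) /\ (`|f x| <= g x) /\ (delta < g x).
  move=> sx; rewrite /h sx; move: sx => /andP[/andP[dg gM] fg].
  have [_ [_ H]] := @quant R eta M (f x) N eta0 HN (le_trans fg gM).
  by [].
have nsE x : ~~ s x -> h x = 0 by move=> /negbTE sx; rewrite /h sx.
have etag x : s x -> eta <= t * g x.
  move=> sx; have [_ [_ dg]] := sE x sx.
  by rewrite /eta mulrC ler_pM2l //; exact: ltW.
pose U := [set y | g y < `|f y|].
have pt x : `|f x - h x| `^ p <= t `^ p * g x `^ p + `|f x| `^ p * \1_U x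
    + g x `^ p * \1_[set x | badb n x] x.
  have i1 : 0 <= \1_U x :> R by rewrite /indic; case: (_ \in _).
  have i2 : 0 <= \1_[set x | badb n x] x :> R by rewrite /indic; case: (_ \in _).
  have P1 := powR_ge0 t p; have P2 := powR_ge0 (g x) p.
  have P3 := powR_ge0 `|f x| p.
  have Q1 := mulr_ge0 P1 P2; have Q2 := mulr_ge0 P3 i1; have Q3 := mulr_ge0 P2 i2.
  have [sx|sx] := boolP (s x).
  - have [/andP[H1 H2] [fg dg]] := sE x sx.
    suff : `|f x - h x| `^ p <= t `^ p * g x `^ p by lra.
    rewrite -powRM ?(ltW t0) ?g0 //; apply: ge0_ler_powR.
    + exact: ltW p0.
    + by rewrite nnegrE.
    + by rewrite nnegrE mulr_ge0 // ltW.
    + rewrite ger0_norm //; apply: (le_trans (ltW H2)); exact: etag.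
  - rewrite nsE // subr0.
    have [gf|fg] := ltrP (g x) `|f x|.
    + suff : \1_U x = 1 :> R by move=> E; rewrite E in Q2 *; lra.
      by rewrite /indic mem_set.
    + have bx : badb n x.
        move: sx; rewrite /s fg andbT negb_and -leNgt -ltNge.
        by [].
      have E : \1_[set x | badb n x] x = 1 :> R by rewrite /indic mem_set.
      rewrite E in Q3 *.
      suff : `|f x| `^ p <= g x `^ p by lra.
      by apply: ge0_ler_powR; [exact: ltW p0|rewrite nnegrE|rewrite nnegrE|].
exists h; split; last first.
  apply: Lnorm_le => //; first exact: ltW.
  have mU : measurable U.
    have : measurable_fun setT (fun x => g x < `|f x|).
      apply: measurable_fun_ltr; [apply: mg|].
      by apply: measurableT_comp => //; apply: mf.
    by move=> /(_ measurableT [set true] I); rewrite setTI.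
  have mfp : measurable_fun setT (fun x => `|f x| `^ p).
    apply: measurableT_comp (measurable_powR p) _.
    by apply: measurableT_comp => //; apply: mf.
  have mfh : measurable_fun setT (fun x => `|f x - h x| `^ p).
    apply: measurableT_comp (measurable_powR p) _.
    by apply: measurableT_comp => //; exact: measurable_funB.
  have m1 : measurable_fun setT (fun x => (t `^ p * g x `^ p)%:E).
    by apply/measurable_EFinP; exact: measurable_funM.
  have m2 : measurable_fun setT (fun x => (`|f x| `^ p * \1_U x)%:E).
    by apply/measurable_EFinP; apply: measurable_funM => //; exact: measurable_indic.
  apply: le_trans.
    apply: (@ge0_le_integral _ _ _ mu setT measurableT
      (fun x => (`|f x - h x| `^ p)%:E)
      (fun x => (t `^ p * g x `^ p)%:E + ((`|f x| `^ p * \1_U x)%:E + f_ n x))%E).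
    - by move=> x _; rewrite lee_fin powR_ge0.
    - exact/measurable_EFinP.
    - by apply: emeasurable_funD => //; apply: emeasurable_funD.
    - by move=> x _; rewrite /f_ -!EFinD lee_fin addrA; exact: pt.
  have i1 x : 0 <= \1_U x :> R by rewrite /indic; case: (_ \in _).
  have n1 : forall x, setT x -> (0 <= (t `^ p * g x `^ p)%:E)%E.
    by move=> x _; rewrite lee_fin mulr_ge0 // powR_ge0.
  have n2 : forall x, setT x -> (0 <= (`|f x| `^ p * \1_U x)%:E)%E.
    by move=> x _; rewrite lee_fin mulr_ge0 // powR_ge0.
  have n3 : forall x, setT x -> (0 <= f_ n x)%E.
    by move=> x _; rewrite /f_ lee_fin mulr_ge0 ?powR_ge0 // /indic; case: (_ \in _).
  have n23 : forall x, setT x -> (0 <= (`|f x| `^ p * \1_U x)%:E + f_ n x)%E.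
    by move=> x _; rewrite adde_ge0 ?n2 ?n3.
  have m23 := emeasurable_funD m2 (mf_ n).
  rewrite ge0_integralD //.
  rewrite [X in (_ + X)%E]ge0_integralD //.
  have -> : (\int[mu]_x (t `^ p * g x `^ p)%:E = (t `^ p)%:E * G%:E)%E.
    rewrite -GE -ge0_integralZl_EFin //.
    - by move=> x _; rewrite lee_fin powR_ge0.
    - exact/measurable_EFinP.
    - exact: powR_ge0.
  have -> : (\int[mu]_x (`|f x| `^ p * \1_U x)%:E = \int[mu]_(x in U) (`|f x| `^ p)%:E)%E.
    rewrite [RHS]integral_mkcond; apply: eq_integral => x _.
    by rewrite /patch /indic; case: (x \in U); rewrite ?mulr1 ?mulr0.
  apply: (@le_trans _ _ ((t `^ p * G)%:E + (gam%:E + gam%:E))%E).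
    rewrite EFinM; apply: leeD => //; apply: leeD; first exact: gUI.
    exact: ltW.
  rewrite -!EFinD lee_fin tp.
  have HG : gam / (G + 1) * G <= gam.
    by rewrite mulrAC ler_pdivrMr // ler_pM2l // lerDl.
  have e4 : e = 4 * gam by rewrite /gam mulrC divfK.
  rewrite -/e; lra.
split.
  have hb x : `|h x| <= (1 + t) * g x.
    have [sx|sx] := boolP (s x).
    - have [/andP[H1 H2] [fg dg]] := sE x sx.
      have := etag x sx.
      have hxE : h x = f x - (f x - h x) by ring.
      have := ler_normB (f x) (f x - h x); rewrite -hxE (ger0_norm H1).
      lra.
    - by rewrite nsE // normr0 mulr_ge0 // addr_ge0 // ltW.
  rewrite inE; apply/andP; split; rewrite inE /=; first by apply: mh.
  rewrite /finite_norm unlock poweR_lty //=.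
  have mh1 : measurable_fun setT (fun x => (`|h x| `^ p)%:E).
    apply/measurable_EFinP; apply: measurableT_comp (measurable_powR p) _.
    by apply: measurableT_comp => //; apply: mh.
  have mh2 : measurable_fun setT (fun x => ((1 + t) `^ p)%:E * (g x `^ p)%:E)%E.
    by apply/measurable_EFinP; apply: measurable_funM => //.
  have nh1 : forall x, setT x -> (0 <= (`|h x| `^ p)%:E)%E.
    by move=> x _; rewrite lee_fin powR_ge0.
  apply: (@le_lt_trans _ _ (\int[mu]_x (((1 + t) `^ p)%:E * (g x `^ p)%:E))%E).
    apply: ge0_le_integral => // x _.
    rewrite -EFinM lee_fin -powRM ?g0 //; last by rewrite addr_ge0 // ltW.
    apply: ge0_ler_powR; [exact: ltW p0|by rewrite nnegrE|
      by rewrite nnegrE mulr_ge0 // addr_ge0 // ltW|exact: hb].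
  rewrite ge0_integralZl_EFin //.
  - by rewrite GE -EFinM ltry.
  - by move=> x _; rewrite lee_fin powR_ge0.
  - exact/measurable_EFinP.
  - exact: powR_ge0.
exists (size V), a, B; split => //.
Qed.
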